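(* Let $w$ be an outer commutator word in $r$ variables $x_1,\ldots,x_r$, of height $h$, and let $\mathbf{N}=(N_1,\ldots,N_r)$ be a tuple of normal subgroups of a group $G$. Then there exists a series \[ [w(\mathbf{N}),w(\mathbf{N})]=V_0\le V_1\le\cdots\le V_t=w(\mathbf{N}) \] of normal subgroups of $G$ such that, for every $i=1,\ldots,t$: (1) $V_i/V_{i-1}$ is the image of an extension $v_i(\mathbf{M}_i)$ of $w(\mathbf{N})$ by outer commutators, i.e. $V_i=v_i(\mathbf{M}_i)V_{i-1}$; (2) the extended word $v_i$ depends only on $w$ (not on $G$ or $\mathbf{N}$), and $v_i$ has degree $0$ if $h=0$ and degree at most $h-1$ if $h\ge 1$; (3) the procedure constructing the outer commutator extension $\mathbf{M}_i$ from $\mathbf{N}$ depends only on $w$ (not on $G$ or $\mathbf{N}$); (4) modulo $V_{i-1}$, the word $v_i$ is linear in one component of the tuple $\mathbf{M}_i$. Furthermore, the length $t$ of the series is $1$ if $h=0$ and at most $2^h+2^{h-1}-1$ if $h\ge 1$.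
   Context: Outer commutator words are defined recursively: every single variable is an outer commutator word (of height $0$), and if $\alpha,\beta$ are outer commutator words in disjoint sets of variables then $w=[\alpha,\beta]$ is an outer commutator word, of height $1+\max\{\mathrm{ht}(\alpha),\mathrm{ht}(\beta)\}$. For a tuple $\mathbf{S}=(S_1,\ldots,S_s)$ of subsets of $G$ and a word $v$ in $s$ variables, $v\{\mathbf{S}\}$ is the set of values $v(g_1,\ldots,g_s)$ with $g_j\in S_j$ and $v(\mathbf{S})=\langle v\{\mathbf{S}\}\rangle$. Let $Y=\{y_1,y_2,\ldots\}$ be a set of variables disjoint from $\{x_1,x_2,\ldots\}$. Extended words of $w$: $w$ itself is an extended word of $w$ of degree $0$; if $v$ is an extended word of $w$ of degree $k$, then replacing an outer-commutator subword $\gamma$ of $v$ by $[\gamma,\delta]$ or $[\delta,\gamma]$, where $\delta$ is an outer commutator word in variables from $Y$ not occurring in $v$, yields an extended word of $w$ of degree $k+1$. An extended word of $w$ thus involves $x_1,\ldots,x_r$ and some variables $y_1,\ldots,y_{s-r}$. An outer commutator extension of $\mathbf{N}$ is a tuple $\mathbf{M}=(M_1,\ldots,M_s)$, $s\ge r$, where each $M_j=w_j(\mathbf{N}_j)$ for an outer commutator word $w_j$ and a tuple $\mathbf{N}_j$ all of whose components are components of $\mathbf{N}$, with $N_j$ among the components of $\mathbf{N}_j$ when $j\le r$. An extension of $w(\mathbf{N})$ by outer commutators is a subgroup $v(\mathbf{M})$ where $v$ is an extended word of $w$ and $\mathbf{M}$ is an outer commutator extension of $\mathbf{N}$, with $M_j$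 placed in the variable $x_j$ for $j\le r$ and the remaining $M_j$ in the $Y$-variables. The word $v$ is linear in the $j$-th component of $\mathbf{M}$ modulo a normal subgroup $V$ if $v(g_1,\ldots,g_jg_j',\ldots,g_s)\equiv v(g_1,\ldots,g_j,\ldots,g_s)\,v(g_1,\ldots,g_j',\ldots,g_s)\pmod V$ for all $g_k\in M_k$ and $g_j'\in M_j$. *)

(* Defs.v *)
From mathcomp Require Import all_boot.
Set Implicit Arguments. Unset Strict Implicit. Unset Printing Implicit Defensive.

Record group := Group {
  gcar :> Type;
  gmul : gcar -> gcar -> gcar;
  ginv : gcar -> gcar;
  gone : gcar;
  gmulA : forall x y z, gmul x (gmul y z) = gmul (gmul x y) z;
  gmul1 : forall x, gmul gone x = x;
  gmulV : forall x, gmul (ginv x) x = gone }.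

Definition gset (G : group) := G -> Prop.

Definition subset_of (G : group) (A B : gset G) := forall x, A x -> B x.
Definition seteq (G : group) (A B : gset G) := forall x, A x <-> B x.

Definition is_subgroup (G : group) (H : gset G) :=
  [/\ H (gone G),
      (forall x y, H x -> H y -> H (gmul x y)) &
      (forall x, H x -> H (ginv x))].

Definition gconj (G : group) (x y : G) : G := gmul (ginv y) (gmul x y).

Definition is_normal (G : group) (H : gset G) :=
  is_subgroup H /\ (forall x y, H x -> H (gconj x y)).

Definition gen (G : group) (S : gset G) : gset G :=
  fun x => forall H : gset G, is_subgroup H -> subset_of S H -> H x.

Definition gcomm (G : group) (x y : G) : G :=
  gmul (ginv x) (gmul (ginv y) (gmul x y)).

Definition commsub (G : group) (A B : gset G) : gset G :=
  gen (fun z => exists a b, [/\ A a, B b & z = gcomm a b]).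

Definition setmul (G : group) (A B : gset G) : gset G :=
  fun z => exists a b, [/\ A a, B b & z = gmul a b].

Definition congr_mod (G : group) (V : gset G) (x y : G) := V (gmul x (ginv y)).

Inductive word (V : Type) := Leaf of V | Comm of word V & word V.
Arguments Leaf {V}. Arguments Comm {V}.

Fixpoint vars (V : Type) (w : word V) : seq V :=
  match w with Leaf v => [:: v] | Comm a b => vars a ++ vars b end.

Fixpoint height (V : Type) (w : word V) : nat :=
  match w with Leaf _ => 0 | Comm a b => (maxn (height a) (height b)).+1 end.

Fixpoint map_word (V W : Type) (f : V -> W) (w : word V) : word W :=
  match w with Leaf v => Leaf (f v) | Comm a b => Comm (map_word f a) (map_word f b) end.

Definition is_ocw (V : eqType) (w : word V) := uniq (vars w).

Fixpoint eval (G : group) (V : Type) (w : word V) (g : V -> G) : G :=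
  match w with Leaf v => g v | Comm a b => gcomm (eval a g) (eval b g) end.

Definition word_values (G : group) (V : eqType) (w : word V) (S : V -> gset G) : gset G :=
  fun x => exists g : V -> G, (forall k, k \in vars w -> S k (g k)) /\ x = eval w g.

Definition word_sub (G : group) (V : eqType) (w : word V) (S : V -> gset G) : gset G :=
  gen (word_values w S).

(* Variables: inl j is x_j (j-th variable of w), inr j is y_j (in Y). *)
Definition evar := (nat + nat)%type.

Inductive graft (d : word evar) : word evar -> word evar -> Prop :=
  | graft_here_r g : graft d g (Comm g d)
  | graft_here_l g : graft d g (Comm d g)
  | graft_left a a' b : graft d a a' -> graft d (Comm a b) (Comm a' b)
  | graft_right a b b' : graft d b b' -> graft d (Comm a b) (Comm a b').

Inductive ext_word (w : word nat) : word evar -> nat -> Prop :=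
  | ext_word0 : ext_word w (map_word inl w) 0
  | ext_wordS v k (d : word nat) v' :
      ext_word w v k ->
      is_ocw d ->
      (forall j, j \in vars d -> inr j \notin vars v) ->
      graft (map_word inr d) v v' ->
      ext_word w v' k.+1.

(* A recipe for one component M_j = u(N_j): an outer commutator word u in
   variables nat, and a map telling which component of N is put in each
   variable of u (so N_j = (N_{cmap k})_k). *)
Record oc_comp := OcComp { cword : word nat; cmap : nat -> nat }.

Definition comp_valid (r : nat) (c : oc_comp) :=
  is_ocw (cword c) /\ (forall k, k \in vars (cword c) -> cmap c k < r).

Definition comp_sub (G : group) (N : nat -> gset G) (c : oc_comp) : gset G :=
  word_sub (cword c) (fun k => N (cmap c k)).

(* E : evar -> oc_comp is an outer commutator extension of an r-tuple, used with
   the extended word v: every variable of v gets a valid recipe, and for the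
   x-variable x_j the component N_j occurs among the components used. *)
Definition oc_ext_valid (r : nat) (v : word evar) (E : evar -> oc_comp) :=
  forall z, z \in vars v ->
    comp_valid r (E z) /\
    (forall j, z = inl j -> exists2 k, k \in vars (cword (E z)) & cmap (E z) k = j).

Definition ext_tuple (G : group) (N : nat -> gset G) (E : evar -> oc_comp) : evar -> gset G :=
  fun z => comp_sub N (E z).

Definition linear_mod (G : group) (V : gset G) (v : word evar) (M : evar -> gset G) (l : evar) :=
  forall g : evar -> G, (forall z, z \in vars v -> M z (g z)) ->
  forall a, M l a ->
    congr_mod V (eval v (fun z => if z == l then gmul (g l) a else g z))
                (gmul (eval v g) (eval v (fun z => if z == l then a else g z))).

Record step := Step { sword : word evar; sext : evar -> oc_comp; slin : evar }.

(* Main.v *)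
Require Import Defs.
From mathcomp Require Import all_boot.
From mathcomp Require Import zify.
Set Implicit Arguments. Unset Strict Implicit. Unset Printing Implicit Defensive.


Section Grp.
Variable G : group.
Implicit Types x y z a b c : G.
Local Infix "\*" := gmul (at level 40, left associativity).
Local Notation "x ^-1" := (ginv x).
Local Notation "1" := (gone G).

Lemma mulgV x : x \* x^-1 = 1.
Proof.
have h : forall y, y \* y = y -> y = 1.
  move=> y hy. by rewrite -(gmul1 y) -(gmulV y) -gmulA hy.
apply: h. rewrite -gmulA (gmulA (x^-1)) gmulV gmul1 //.
Qed.
Lemma mulg1 x : x \* 1 = x.
Proof. by rewrite -(gmulV x) gmulA mulgV gmul1. Qed.
Lemma mulKg x y : x^-1 \* (x \* y) = y.
Proof. by rewrite gmulA gmulV gmul1. Qed.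
Lemma mulKVg x y : x \* (x^-1 \* y) = y.
Proof. by rewrite gmulA mulgV gmul1. Qed.
Lemma invg_uniq x y : x \* y = 1 -> x^-1 = y.
Proof. move=> h. by rewrite -(mulg1 (x^-1)) -h mulKg. Qed.
Lemma invgK x : (x^-1)^-1 = x.
Proof. apply: invg_uniq; exact: gmulV. Qed.
Lemma invMg x y : (x \* y)^-1 = y^-1 \* x^-1.
Proof. apply: invg_uniq. by rewrite -gmulA mulKVg mulgV. Qed.
Lemma invg1 : 1^-1 = 1.
Proof. apply: invg_uniq; exact: gmul1. Qed.

Ltac gnorm := rewrite /gcomm /gconj;
  repeat (rewrite ?invMg ?invgK ?invg1 ?gmul1 ?mulg1 -?gmulA ?mulKg ?mulKVg ?mulgV ?gmulV).

Lemma hall_witt x y z :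
  gconj (gcomm (gcomm x (y^-1)) z) y \* (gconj (gcomm (gcomm y (z^-1)) x) z \* gconj (gcomm (gcomm z (x^-1)) y) x) = 1.
Proof. gnorm. done. Qed.

Lemma comm_mull k c z : gcomm (k \* c) z = gconj (gcomm k z) c \* gcomm c z.
Proof. gnorm. done. Qed.
Lemma conj_commJ x y h : gcomm (gconj x h) y = gconj (gcomm x (gconj y (h^-1))) h.
Proof. gnorm. done. Qed.
Lemma comm_mulr x y y' : gcomm x (y \* y') = gcomm x y' \* gconj (gcomm x y) y'.
Proof. gnorm. done. Qed.
Lemma comm_invl x y : gcomm (x^-1) y = (gconj (gcomm x y) (x^-1))^-1.
Proof. gnorm. done. Qed.
Lemma comm_invr x y : gcomm x (y^-1) = (gconj (gcomm x y) (y^-1))^-1.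
Proof. gnorm. done. Qed.
Lemma conjM x y h : gconj (x \* y) h = gconj x h \* gconj y h.
Proof. gnorm. done. Qed.
Lemma conj1 h : gconj 1 h = 1.
Proof. gnorm. done. Qed.
Lemma conjV x h : gconj (x^-1) h = (gconj x h)^-1.
Proof. gnorm. done. Qed.
Lemma conjK x h : gconj (gconj x h) (h^-1) = x.
Proof. gnorm. done. Qed.
Lemma conj_comm x y h : gconj (gcomm x y) h = gcomm (gconj x h) (gconj y h).
Proof. gnorm. done. Qed.
Lemma comm_conjl x y : gcomm x y = x^-1 \* gconj x y.
Proof. gnorm. done. Qed.
Lemma comm_conjr x y : gcomm x y = gconj (y^-1) x \* y.
Proof. gnorm. done. Qed.
Lemma comm_sym x y : gcomm x y = (gcomm y x)^-1.
Proof. gnorm. done. Qed.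
Lemma comm1l y : gcomm 1 y = 1.
Proof. gnorm. done. Qed.
Lemma comm1r y : gcomm y 1 = 1.
Proof. gnorm. done. Qed.

Implicit Types H K S X Y Z : gset G.

Lemma sg1 H : is_subgroup H -> H 1.
Proof. by case. Qed.
Lemma sgM H x y : is_subgroup H -> H x -> H y -> H (x \* y).
Proof. by case=> _ h _; apply: h. Qed.
Lemma sgV H x : is_subgroup H -> H x -> H (x^-1).
Proof. by case=> _ _ h; apply: h. Qed.
Lemma sgVr H x : is_subgroup H -> H (x^-1) -> H x.
Proof. by move=> hH /(sgV hH); rewrite invgK. Qed.
Lemma nsg_sg H : is_normal H -> is_subgroup H.
Proof. by case. Qed.
Lemma nsgJ H x y : is_normal H -> H x -> H (gconj x y).
Proof. by case=> _ h; apply: h. Qed.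

Lemma gen_sg S : is_subgroup (gen S).
Proof.
split.
- by move=> H hH _; apply: sg1.
- by move=> x y hx hy H hH hS; apply: sgM => //; [apply: hx | apply: hy].
- by move=> x hx H hH hS; apply: sgV => //; apply: hx.
Qed.
Lemma gen_in S x : S x -> gen S x.
Proof. by move=> hx H _ hS; apply: hS. Qed.
Lemma gen_min S H : is_subgroup H -> subset_of S H -> subset_of (gen S) H.
Proof. by move=> hH hS x hx; apply: hx. Qed.

Lemma gen_normal S : (forall x y, S x -> S (gconj x y)) -> is_normal (gen S).
Proof.
move=> hS; split; first exact: gen_sg.
move=> x y hx.
have sgT : is_subgroup (fun x => gen S (gconj x y)).
  split.
  - by rewrite conj1; exact: (sg1 (gen_sg S)).
  - by move=> a b ha hb; rewrite conjM; exact: (sgM (gen_sg S)).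
  - by move=> a ha; rewrite conjV; exact: (sgV (gen_sg S)).
apply: (gen_min sgT) hx => a ha; apply: gen_in; exact: hS.
Qed.

Lemma centl_sg Y Z : is_normal Z -> is_subgroup (fun x => forall y, Y y -> Z (gcomm x y)).
Proof.
move=> hZ; split.
- by move=> y _; rewrite comm1l; exact: (sg1 (nsg_sg hZ)).
- move=> a b ha hb y hy; rewrite comm_mull; apply: (sgM (nsg_sg hZ)).
    by apply: nsgJ => //; apply: ha. by apply: hb.
- move=> a ha y hy; rewrite comm_invl; apply: (sgV (nsg_sg hZ)).
  by apply: nsgJ => //; apply: ha.
Qed.
Lemma centr_sg X Z : is_normal Z -> is_subgroup (fun y => forall x, X x -> Z (gcomm x y)).
Proof.
move=> hZ; split.
- by move=> y _; rewrite comm1r; exact: (sg1 (nsg_sg hZ)).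
- move=> a b ha hb y hy; rewrite comm_mulr; apply: (sgM (nsg_sg hZ)).
    by apply: hb. by apply: nsgJ => //; apply: ha.
- move=> a ha y hy; rewrite comm_invr; apply: (sgV (nsg_sg hZ)).
  by apply: nsgJ => //; apply: ha.
Qed.

Lemma comm_gen X Y Z : is_normal Z -> (forall x y, X x -> Y y -> Z (gcomm x y)) ->
  forall x y, gen X x -> gen Y y -> Z (gcomm x y).
Proof.
move=> hZ h x y hx hy.
have h1 : forall x, gen X x -> forall y, Y y -> Z (gcomm x y).
  move=> x' hx'; apply: (gen_min (centl_sg Y hZ)) hx' => a ha b hb; exact: h.
have h2 : forall y, gen Y y -> forall x, gen X x -> Z (gcomm x y).
  move=> y' hy'; apply: (gen_min (centr_sg (gen X) hZ)) hy' => b hb a ha; exact: h1.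
exact: h2.
Qed.

Lemma commsub_in X Y x y : X x -> Y y -> commsub X Y (gcomm x y).
Proof. by move=> hx hy; apply: gen_in; exists x, y. Qed.
Lemma commsub_sg X Y : is_subgroup (commsub X Y).
Proof. exact: gen_sg. Qed.
Lemma commsub_min X Y H : is_subgroup H -> (forall x y, X x -> Y y -> H (gcomm x y)) ->
  subset_of (commsub X Y) H.
Proof. by move=> hH h; apply: gen_min => // z [x [y [hx hy ->]]]; apply: h. Qed.
Lemma commsub_normal X Y : is_normal X -> is_normal Y -> is_normal (commsub X Y).
Proof.
move=> hX hY; apply: gen_normal => z h [x [y [hx hy ->]]].
rewrite conj_comm; exists (gconj x h), (gconj y h); split => //; exact: nsgJ.
Qed.
Lemma commsub_subl X Y : is_normal X -> subset_of (commsub X Y) X.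
Proof.
move=> hX; apply: commsub_min; first exact: nsg_sg.
move=> x y hx hy; rewrite comm_conjl; apply: (sgM (nsg_sg hX)).
  exact: (sgV (nsg_sg hX)). exact: nsgJ.
Qed.
Lemma commsub_subr X Y : is_normal Y -> subset_of (commsub X Y) Y.
Proof.
move=> hY; apply: commsub_min; first exact: nsg_sg.
move=> x y hx hy; rewrite comm_conjr; apply: (sgM (nsg_sg hY)) => //.
apply: nsgJ => //; exact: (sgV (nsg_sg hY)).
Qed.
Lemma commsub_sym X Y : subset_of (commsub X Y) (commsub Y X).
Proof.
apply: commsub_min; first exact: commsub_sg.
move=> x y hx hy; rewrite comm_sym; apply: (sgV (commsub_sg _ _)).
exact: commsub_in.
Qed.
Lemma commsub_mono X Y X' Y' : subset_of X X' -> subset_of Y Y' ->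
  subset_of (commsub X Y) (commsub X' Y').
Proof.
move=> hX hY; apply: commsub_min; first exact: commsub_sg.
move=> x y hx hy; apply: commsub_in; [exact: hX | exact: hY].
Qed.

Lemma setmul_normal X Y : is_normal X -> is_normal Y -> is_normal (setmul X Y).
Proof.
move=> hX hY; split; first split.
- exists 1, 1; split; try exact: sg1 (nsg_sg _); by rewrite gmul1.
- move=> _ _ [x1 [y1 [h1 h1' ->]]] [x2 [y2 [h2 h2' ->]]].
  exists (x1 \* x2), (gconj y1 x2 \* y2); split.
  + exact: sgM (nsg_sg hX) h1 h2.
  + apply: sgM (nsg_sg hY) _ h2'; exact: nsgJ.
  + rewrite /gconj; gnorm; done.
- move=> _ [x [y [hx hy ->]]].
  exists (x^-1), (gconj (y^-1) (x^-1)); split.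
  + exact: sgV (nsg_sg hX) hx.
  + apply: nsgJ => //; exact: sgV (nsg_sg hY) hy.
  + rewrite /gconj; gnorm; done.
- move=> _ h [x [y [hx hy ->]]].
  exists (gconj x h), (gconj y h); split; try exact: nsgJ.
  by rewrite conjM.
Qed.
Lemma setmul_l X Y x : is_subgroup Y -> X x -> setmul X Y x.
Proof. move=> hY hx; exists x, 1; split => //; [exact: sg1 | by rewrite mulg1]. Qed.
Lemma setmul_r X Y y : is_subgroup X -> Y y -> setmul X Y y.
Proof. move=> hX hy; exists 1, y; split => //; [exact: sg1 | by rewrite gmul1]. Qed.
Lemma setmul_min X Y H : is_subgroup H -> subset_of X H -> subset_of Y H ->
  subset_of (setmul X Y) H.
Proof. move=> hH hX hY _ [x [y [hx hy ->]]]; apply: sgM => //; [exact: hX | exact: hY]. Qed.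

Lemma commsub_mull X Y B : is_normal X -> is_normal Y -> is_normal B ->
  subset_of (commsub (setmul X Y) B) (setmul (commsub X B) (commsub Y B)).
Proof.
move=> hX hY hB; apply: commsub_min.
  exact: nsg_sg (setmul_normal (commsub_normal hX hB) (commsub_normal hY hB)).
move=> _ b [x [y [hx hy ->]]] hb; rewrite comm_mull.
exists (gconj (gcomm x b) y), (gcomm y b); split => //.
  exact: (nsgJ _ (commsub_normal hX hB) (commsub_in hx hb)).
exact: commsub_in.
Qed.

Lemma three_subgroup X Y Z K : is_normal X -> is_normal Y -> is_normal Z -> is_normal K ->
  subset_of (commsub (commsub Y Z) X) K -> subset_of (commsub (commsub Z X) Y) K ->
  subset_of (commsub (commsub X Y) Z) K.
Proof.
move=> hX hY hZ hK h1 h2.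
have hsg := nsg_sg hK.
have key : forall x y z, X x -> Y y -> Z z -> K (gcomm (gcomm x y) z).
  move=> x y z hx hy hz.
  have hw := hall_witt x (y^-1) z.
  rewrite invgK in hw.
  set P := gconj _ y^-1 in hw; set Q := gconj _ z in hw; set R := gconj _ x in hw.
  have hQ : K Q.
    apply: nsgJ => //; apply: h1; apply: commsub_in => //.
    apply: commsub_in; [exact: sgV (nsg_sg hY) hy | exact: sgV (nsg_sg hZ) hz].
  have hR : K R.
    apply: nsgJ => //; apply: h2; apply: commsub_in; last exact: sgV (nsg_sg hY) hy.
    apply: commsub_in => //; exact: sgV (nsg_sg hX) hx.
  have hP : K P.
    have -> : P = (Q \* R)^-1 by rewrite -(invg_uniq hw) invgK.
    exact: (sgV hsg (sgM hsg hQ hR)).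
  have := nsgJ (y^-1^-1) hK hP; by rewrite /P conjK.
have hC : is_subgroup (fun c => forall z, Z z -> K (gcomm c z)).
  exact: (centl_sg Z hK).
apply: commsub_min => // c z hc hz.
apply: (gen_min hC) hc z hz => _ [x [y [hx hy ->]]] z hz; exact: key.
Qed.

Section Words.
Variable V : eqType.
Implicit Types (w : word V) (g : V -> G) (Q : V -> gset G).

Lemma eval_ext w g g' : (forall k, k \in vars w -> g k = g' k) -> eval w g = eval w g'.
Proof.
elim: w => [v|a iha b ihb] /= h; first by apply: h; rewrite inE.
rewrite iha ?ihb // => k hk; apply: h; rewrite mem_cat hk ?orbT //.
Qed.

Lemma eval_conj w g h : eval w (fun k => gconj (g k) h) = gconj (eval w g) h.
Proof. by elim: w => [v|a iha b ihb] //=; rewrite iha ihb conj_comm. Qed.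

Lemma values_conj w Q x h : (forall k, k \in vars w -> is_normal (Q k)) ->
  word_values w Q x -> word_values w Q (gconj x h).
Proof.
move=> hN [g [hg ->]]; exists (fun k => gconj (g k) h); split; last by rewrite eval_conj.
move=> k hk; apply: nsgJ; [exact: hN | exact: hg].
Qed.

Lemma word_sub_normal w Q : (forall k, k \in vars w -> is_normal (Q k)) ->
  is_normal (word_sub w Q).
Proof. move=> hN; apply: gen_normal => x h; exact: values_conj. Qed.

Lemma values_sub w Q x : word_values w Q x -> word_sub w Q x.
Proof. exact: gen_in. Qed.

Lemma eval_values w Q g : (forall k, k \in vars w -> Q k (g k)) -> word_sub w Q (eval w g).
Proof. by move=> h; apply: values_sub; exists g. Qed.

Lemma word_sub_comm u1 u2 Q :
  (forall k, k \in vars u1 -> k \notin vars u2) ->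
  (forall k, k \in vars (Comm u1 u2) -> is_normal (Q k)) ->
  seteq (word_sub (Comm u1 u2) Q) (commsub (word_sub u1 Q) (word_sub u2 Q)).
Proof.
move=> hd hN x; split.
  apply: gen_min; first exact: commsub_sg.
  move=> _ [g [hg ->]] /=; apply: commsub_in; apply: eval_values => k hk; apply: hg;
  by rewrite /= mem_cat hk ?orbT.
apply: commsub_min; first exact: nsg_sg (word_sub_normal hN).
apply: comm_gen; first exact: word_sub_normal.
move=> _ _ [g1 [hg1 ->]] [g2 [hg2 ->]].
apply: values_sub; exists (fun k => if k \in vars u1 then g1 k else g2 k); split.
  move=> k; rewrite /= mem_cat; case: ifP => hk /=; first by move=> _; apply: hg1.
  by move=> h2; apply: hg2.
rewrite /=; congr gcomm; apply: eval_ext => k hk /=.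
  by rewrite hk.
by case: ifP => // /hd; rewrite hk.
Qed.

Lemma word_sub_ext w Q Q' : (forall k, k \in vars w -> seteq (Q k) (Q' k)) ->
  seteq (word_sub w Q) (word_sub w Q').
Proof.
move=> h.
have H1 : forall (S1 S2 : V -> gset G), (forall k, k \in vars w -> subset_of (S1 k) (S2 k)) ->
  subset_of (word_sub w S1) (word_sub w S2).
  move=> S1 S2 hs; apply: gen_min; first exact: gen_sg.
  move=> _ [g [hg ->]]; apply: eval_values => k hk; apply: hs => //; exact: hg.
move=> x; split; apply: H1 => k hk y; move: (h k hk y) => []//.
Qed.

Lemma word_sub_leaf k Q : is_subgroup (Q k) -> seteq (word_sub (Leaf k) Q) (Q k).
Proof.
move=> hS x; split.
  apply: gen_min => // _ [g [hg ->]] /=; apply: hg; by rewrite inE.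
move=> hx; apply: values_sub; exists (fun _ => x); split => // j; rewrite inE => /eqP -> //.
Qed.
End Words.

Lemma vars_map (V W : Type) (f : V -> W) (w : word V) : vars (map_word f w) = map f (vars w).
Proof. by elim: w => [v|a iha b ihb] //=; rewrite iha ihb map_cat. Qed.
Lemma eval_map (V W : Type) (f : V -> W) (w : word V) (g : W -> G) :
  eval (map_word f w) g = eval w (fun v => g (f v)).
Proof. by elim: w => [v|a iha b ihb] //=; rewrite iha ihb. Qed.

Lemma word_sub_inl (w : word nat) (S : evar -> gset G) :
  seteq (word_sub (map_word inl w) S) (word_sub w (fun j => S (inl j))).
Proof.
move=> x; split.
  apply: gen_min; first exact: gen_sg.
  move=> _ [g [hg ->]]; rewrite eval_map; apply: eval_values => k hk; apply: hg.
  by rewrite vars_map map_f.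
apply: gen_min; first exact: gen_sg.
move=> _ [g [hg ->]].
have -> : eval w g = eval (map_word inl w) (fun e : evar => match e with inl j => g j | inr _ => 1 end).
  by rewrite eval_map.
apply: eval_values => e; rewrite vars_map => /mapP [j hj ->]; exact: hg.
Qed.

Implicit Types (u v : word evar) (M : evar -> gset G) (l : evar).

Lemma linear_leaf K M l : is_subgroup K -> linear_mod K (Leaf l) M l.
Proof. move=> hK g _ a _; rewrite /congr_mod /= eqxx mulgV; exact: sg1. Qed.

Lemma linear_mod_ext K v M M' l : (forall e, e \in vars v -> M e = M' e) -> l \in vars v ->
  linear_mod K v M l -> linear_mod K v M' l.
Proof.
move=> hM hl h g hg a ha; apply: h.
  by move=> e he; rewrite hM //; apply: hg.
by rewrite hM.
Qed.

Lemma linear_mod_mono K K' v M l : subset_of K K' -> linear_mod K v M l -> linear_mod K' v M l.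
Proof. move=> hs h g hg a ha; apply: hs; exact: h. Qed.

Lemma comml_id k x p z :
  gcomm (k \* (x \* p)) z \* (gcomm x z \* gcomm p z)^-1 =
  gconj (gcomm k z) (x \* p) \* gconj (gcomm (gcomm x z) p) ((gcomm x z)^-1).
Proof. gnorm. done. Qed.

Lemma commr_id k x p z :
  gcomm z (k \* (x \* p)) \* (gcomm z x \* gcomm z p)^-1 =
  gcomm ((gcomm z p)^-1) ((gcomm z x)^-1) \*
  gconj (gcomm (gcomm z x) p \* gconj (gcomm z k) (x \* p)) ((gcomm z x \* gcomm z p)^-1).
Proof. gnorm. done. Qed.

Lemma lin_setup K u M l g a : linear_mod K u M l ->
  (forall e, e \in vars u -> M e (g e)) -> M l a ->
  let X := eval u (fun e => if e == l then g l \* a else g e) in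
  let x := eval u g in let p := eval u (fun e => if e == l then a else g e) in
  [/\ K (X \* (x \* p)^-1), X = (X \* (x \* p)^-1) \* (x \* p),
      word_sub u M x & word_sub u M p].
Proof.
move=> hl hg ha X x p; split.
- exact: hl.
- by rewrite -gmulA gmulV mulg1.
- exact: eval_values.
- apply: eval_values => e he; case: eqP => [->|_] //; exact: hg.
Qed.

Lemma eval_notin (b : word evar) l (g : evar -> G) y : l \notin vars b ->
  eval b (fun e => if e == l then y else g e) = eval b g.
Proof.
move=> hl; apply: eval_ext => e he; case: eqP => // el.
by move: hl; rewrite -el he.
Qed.

Lemma linear_comml K K' u v M l : l \notin vars v -> is_normal K' -> linear_mod K u M l ->
  (forall k z, K k -> word_sub v M z -> K' (gcomm k z)) ->
  (forall q p, commsub (word_sub u M) (word_sub v M) q -> word_sub u M p -> K' (gcomm q p)) ->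
  linear_mod K' (Comm u v) M l.
Proof.
move=> hlb hK' hlin H1 H2 g hg a ha.
have hgu : forall e, e \in vars u -> M e (g e).
  by move=> e he; apply: hg; rewrite /= mem_cat he.
have hz : word_sub v M (eval v g).
  by apply: eval_values => e he; apply: hg; rewrite /= mem_cat he orbT.
case: (lin_setup hlin hgu ha) => hk eX hx hp.
rewrite /congr_mod /= !(@eval_notin v l g) // eX comml_id.
have sK := nsg_sg hK'.
apply: (sgM sK); apply: nsgJ => //; first exact: H1.
apply: H2 => //; exact: commsub_in.
Qed.

Lemma linear_commr K K' u v M l : l \notin vars v -> is_normal K' -> is_normal (word_sub u M) ->
  linear_mod K u M l ->
  (forall z k, word_sub v M z -> K k -> K' (gcomm z k)) ->
  (forall q p, commsub (word_sub v M) (word_sub u M) q -> word_sub u M p -> K' (gcomm q p)) ->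
  linear_mod K' (Comm v u) M l.
Proof.
move=> hlb hK' hU hlin H1 H2 g hg a ha.
have hgu : forall e, e \in vars u -> M e (g e).
  by move=> e he; apply: hg; rewrite /= mem_cat he orbT.
have hz : word_sub v M (eval v g).
  by apply: eval_values => e he; apply: hg; rewrite /= mem_cat he.
case: (lin_setup hlin hgu ha) => hk eX hx hp.
rewrite /congr_mod /= !(@eval_notin v l g) // eX commr_id.
have sK := nsg_sg hK'.
have sC := commsub_sg (word_sub v M) (word_sub u M).
apply: (sgM sK).
  apply: H2; first exact: (sgV sC (commsub_in hz hp)).
  apply: (sgV (nsg_sg hU)); exact: (commsub_subr hU (commsub_in hz hx)).
apply: nsgJ => //; apply: (sgM sK).
  apply: H2 => //; exact: commsub_in.
apply: nsgJ => //; exact: H1.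
Qed.
End Grp.


Definition fresh (s : seq evar) : nat :=
  foldr (fun z m => match z with inr j => maxn j.+1 m | inl _ => m end) 0 s.

Lemma fresh_notin s : inr (fresh s) \notin s.
Proof.
suff h : forall j, inr j \in s -> j < fresh s.
  by apply/negP => /h; rewrite ltnn.
elim: s => [|z s ih] j //=; rewrite inE => /orP [/eqP <-|/ih h].
  by rewrite leq_maxl.
case: z => [i|i]; first exact: h.
by apply: leq_trans h (leq_maxr _ _).
Qed.

Lemma graft_vars d v v' : graft d v v' -> forall z, z \in vars v' -> (z \in vars v) || (z \in vars d).
Proof.
elim => [g|g|a a' b _ ih|a b b' _ ih] z /=; rewrite ?mem_cat.
- by case/orP => ->; rewrite ?orbT.
- by case/orP => ->; rewrite ?orbT.
- by case/orP => [/ih/orP[]->|->]; rewrite ?orbT.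
- by case/orP => [->|/ih/orP[]->]; rewrite ?orbT.
Qed.

Lemma vars_map' (V W : Type) (f : V -> W) (w : word V) : vars (map_word f w) = map f (vars w).
Proof. by elim: w => [v|a iha b ihb] //=; rewrite iha ihb map_cat. Qed.

Lemma inl_map_mem (j : nat) (s : seq nat) : (inl j : evar) \in map inl s = (j \in s).
Proof.
apply/mapP/idP => [[i hi [->]]|h] //; by exists j.
Qed.
Lemma inr_map_inl (j : nat) (s : seq nat) : (inr j : evar) \in map inl s = false.
Proof. by apply/mapP => [[i _]]. Qed.
Lemma inl_map_inr (j : nat) (s : seq nat) : (inl j : evar) \in map inr s = false.
Proof. by apply/mapP => [[i _]]. Qed.

Lemma ext_vars w v k : ext_word w v k -> forall j, inl j \in vars v -> j \in vars w.
Proof.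
elim => [|v0 k0 d v' _ ih _ _ hg] j.
  by rewrite vars_map' inl_map_mem.
move/(graft_vars hg)/orP => [/ih //|]; by rewrite vars_map' inl_map_inr.
Qed.

Lemma ext_commL a b v k : ext_word a v k -> ext_word (Comm a b) (Comm v (map_word inl b)) k.
Proof.
elim => [|v0 k0 d v' _ ih hd hf hg]; first exact: ext_word0.
apply: ext_wordS ih hd _ (graft_left _ hg) => j hj /=.
by rewrite mem_cat vars_map' inr_map_inl orbF; apply: hf.
Qed.

Lemma ext_commR a b v k : ext_word b v k -> ext_word (Comm a b) (Comm (map_word inl a) v) k.
Proof.
elim => [|v0 k0 d v' _ ih hd hf hg]; first exact: ext_word0.
apply: ext_wordS ih hd _ (graft_right _ hg) => j hj /=.
by rewrite mem_cat vars_map' inr_map_inl /=; apply: hf.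
Qed.

Lemma ext_graftA a b v k y : ext_word (Comm a b) (Comm v (map_word inl b)) k ->
  inr y \notin vars v ->
  ext_word (Comm a b) (Comm (Comm v (Leaf (inr y))) (map_word inl b)) k.+1.
Proof.
move=> h hy; apply: (ext_wordS (d := Leaf y)) h _ _ (graft_left _ (graft_here_r _ _)) => //.
by move=> j; rewrite inE => /eqP -> /=; rewrite mem_cat vars_map' inr_map_inl orbF.
Qed.

Lemma ext_F a b : ext_word (Comm a b)
  (Comm (map_word inl a) (Comm (map_word inl b) (Leaf (inr 0)))) 1.
Proof.
apply: (ext_wordS (d := Leaf 0)) (@ext_word0 (Comm a b)) _ _ (graft_right _ (graft_here_r _ _)) => //.
by move=> j; rewrite inE => /eqP -> /=; rewrite mem_cat !vars_map' !inr_map_inl.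
Qed.

Definition Tb (h : nat) := if h == 0 then 1 else 2 ^ h + 2 ^ h.-1 - 1.

Lemma Tb_S m : Tb m.+2 = (Tb m.+1).*2.+1.
Proof.
rewrite /Tb /= !expnS; have := expn_gt0 2 m; lia.
Qed.
Lemma Tb_1 : Tb 1 = 2. Proof. by []. Qed.
Lemma Tb_mono a b : a <= b -> Tb a <= Tb b.
Proof.
move=> h; elim: b h => [|b ih]; first by rewrite leqn0 => /eqP ->.
rewrite leq_eqVlt => /orP [/eqP -> //| /ih h]; apply: leq_trans h _.
case: b {ih} => [//|b]; rewrite Tb_S; lia.
Qed.

Definition leafc (j : nat) := OcComp (Leaf j) (fun k => k).
Definition wordc (u : word nat) := OcComp u (fun k => k).

Definition valid (w : word nat) (v : word evar) (E : evar -> oc_comp) :=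
  forall z, z \in vars v ->
    [/\ is_ocw (cword (E z)),
        (forall k, k \in vars (cword (E z)) -> cmap (E z) k \in vars w) &
        (forall j, z = inl j -> exists2 k, k \in vars (cword (E z)) & cmap (E z) k = j)].

Definition stepB (a : word nat) (s : step) :=
  Step (Comm (map_word inl a) (sword s))
       (fun z => match z with inl j => if j \in vars a then leafc j else sext s z
                            | inr _ => sext s z end)
       (slin s).
Definition stepA (b : word nat) (s : step) :=
  let y := fresh (vars (sword s)) in
  Step (Comm (Comm (sword s) (Leaf (inr y))) (map_word inl b))
       (fun z => match z with inl j => if j \in vars b then leafc j else sext s z
                            | inr j => if j == y then wordc b else sext s z end)
       (slin s).
Definition stepF (a b : word nat) :=
  Step (Comm (map_word inl a) (Comm (map_word inl b) (Leaf (inr 0))))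
       (fun z => match z with inl j => leafc j | inr _ => wordc (Comm a b) end)
       (inr 0).
Definition stepL (x : nat) (b : word nat) :=
  Step (Comm (Leaf (inl x)) (map_word inl b))
       (fun z => match z with inl j => if j == x then wordc (Comm (Leaf x) b) else leafc j
                            | inr _ => leafc x end)
       (inl x).

Lemma uniq_disj (T : eqType) (s1 s2 : seq T) x : uniq (s1 ++ s2) -> x \in s2 -> x \notin s1.
Proof.
rewrite cat_uniq => /and3P [_ /hasPn h _] hx; exact: h.
Qed.
Lemma ocw_l (a b : word nat) : is_ocw (Comm a b) -> is_ocw a.
Proof. by rewrite /is_ocw /= cat_uniq => /and3P []. Qed.
Lemma ocw_r (a b : word nat) : is_ocw (Comm a b) -> is_ocw b.
Proof. by rewrite /is_ocw /= cat_uniq => /and3P []. Qed.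

Lemma valid_leafc (w : word nat) (j : nat) (z : evar) : j \in vars w -> z = inl j \/ (forall j', z <> inl j') ->
  [/\ is_ocw (cword (leafc j)),
      (forall k, k \in vars (cword (leafc j)) -> cmap (leafc j) k \in vars w) &
      (forall j', z = inl j' -> exists2 k, k \in vars (cword (leafc j)) & cmap (leafc j) k = j')].
Proof.
move=> hj hz; split => //= [k|j'].
  by rewrite inE => /eqP ->.
case: hz => [-> [<-]|h /h //]; by exists j; rewrite ?inE.
Qed.

Lemma valid_wordc (u w : word nat) (z : evar) : is_ocw u -> {subset vars u <= vars w} ->
  (forall j', z = inl j' -> j' \in vars u) ->
  [/\ is_ocw (cword (wordc u)),
      (forall k, k \in vars (cword (wordc u)) -> cmap (wordc u) k \in vars w) &
      (forall j', z = inl j' -> exists2 k, k \in vars (cword (wordc u)) & cmap (wordc u) k = j')].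
Proof. move=> ho hs hz; split => // j' /hz h; by exists j'. Qed.

Lemma valid_sub w w' v E : {subset vars w <= vars w'} -> valid w v E -> valid w' v E.
Proof.
move=> hs h z hz; case: (h z hz) => h1 h2 h3; split => // k hk; exact: hs (h2 k hk).
Qed.

Lemma valid_stepB a b s d : is_ocw (Comm a b) -> ext_word b (sword s) d ->
  valid b (sword s) (sext s) -> valid (Comm a b) (sword (stepB a s)) (sext (stepB a s)).
Proof.
move=> ho he hv z /=; rewrite mem_cat vars_map' => /orP [/mapP [j hj ->]|hz].
  rewrite /= hj; apply: (valid_leafc (w := Comm a b)); [by rewrite /= mem_cat hj | by left].
have hs : {subset vars b <= vars (Comm a b)} by move=> k hk; rewrite /= mem_cat hk orbT.
case: z hz => [j|j] hz.
  have hjb := ext_vars he hz.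
  rewrite (negbTE (uniq_disj ho hjb)).
  exact: (valid_sub hs hv).
exact: (valid_sub hs hv).
Qed.

Lemma valid_stepA a b s d : is_ocw (Comm a b) -> ext_word a (sword s) d ->
  valid a (sword s) (sext s) -> valid (Comm a b) (sword (stepA b s)) (sext (stepA b s)).
Proof.
move=> ho he hv z /=.
have hs : {subset vars a <= vars (Comm a b)} by move=> k hk; rewrite /= mem_cat hk.
rewrite !mem_cat vars_map' inE -orbA => /or3P [hz|/eqP ->|/mapP [j hj ->]].
- case: z hz => [j|j] hz.
    have hja := ext_vars he hz.
    have : j \notin vars b.
      apply/negP => hjb; move: (uniq_disj ho hjb); by rewrite hja.
    move/negbTE => ->; exact: (valid_sub hs hv).
  case: eqP => [ej|_]; last exact: (valid_sub hs hv).
  by move: (fresh_notin (vars (sword s))); rewrite -ej hz.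
- rewrite eqxx; apply: (valid_wordc (w := Comm a b)) => //; first exact: ocw_r ho.
  by move=> k hk; rewrite /= mem_cat hk orbT.
- rewrite /= hj; apply: (valid_leafc (w := Comm a b)); [by rewrite /= mem_cat hj orbT | by left].
Qed.

Lemma valid_stepF a b : is_ocw (Comm a b) ->
  valid (Comm a b) (sword (stepF a b)) (sext (stepF a b)).
Proof.
move=> ho z /=; rewrite !mem_cat !vars_map' inE.
case/or3P => [/mapP [j hj ->]|/mapP [j hj ->]|/eqP ->].
- apply: (valid_leafc (w := Comm a b)); [by rewrite /= mem_cat hj | by left].
- apply: (valid_leafc (w := Comm a b)); [by rewrite /= mem_cat hj orbT | by left].
- by apply: (valid_wordc (w := Comm a b)).
Qed.

Lemma valid_stepL x b : is_ocw (Comm (Leaf x) b) ->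
  valid (Comm (Leaf x) b) (sword (stepL x b)) (sext (stepL x b)).
Proof.
move=> ho z /=; rewrite inE vars_map' => /orP [/eqP ->|/mapP [j hj ->]].
  rewrite eqxx; apply: (valid_wordc (w := Comm (Leaf x) b)) => // j' [<-]; by rewrite /= inE eqxx.
case: eqP => [ej|_].
  apply: (valid_wordc (w := Comm (Leaf x) b)) => // j' [<-]; by rewrite /= inE ej eqxx.
apply: (valid_leafc (w := Comm (Leaf x) b)); [by rewrite /= inE hj orbT | by left].
Qed.


Fixpoint Vrec (G : group) (N : nat -> gset G) (D : gset G) (st : nat -> step) (n : nat) : gset G :=
  match n with
  | 0 => D
  | n'.+1 => setmul (word_sub (sword (st n)) (ext_tuple N (sext (st n)))) (Vrec N D st n')
  end.

Definition GoodC (w : word nat) (t : nat) (st : nat -> step) :=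
  [/\ height w = 0 -> t = 1, t <= Tb (height w), 0 < t &
      forall i, 0 < i <= t ->
        [/\ exists2 d, ext_word w (sword (st i)) d & d <= (height w).-1,
            valid w (sword (st i)) (sext (st i)) &
            slin (st i) \in vars (sword (st i))]].

Definition GoodG (w : word nat) (t : nat) (st : nat -> step) :=
  forall (G : group) (N : nat -> gset G), (forall j, j \in vars w -> is_normal (N j)) ->
    let W := word_sub w N in
    seteq (Vrec N (commsub W W) st t) W /\
    forall i, 0 < i <= t ->
      linear_mod (Vrec N (commsub W W) st i.-1) (sword (st i)) (ext_tuple N (sext (st i)))
                 (slin (st i)).

Section Main.
Variable G : group.
Implicit Types (X Y Z K H D : gset G) (N : nat -> gset G).

Lemma sub_trans X Y Z : subset_of X Y -> subset_of Y Z -> subset_of X Z.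
Proof. by move=> h1 h2 x /h1 /h2. Qed.
Lemma sq_l X Y : seteq X Y -> subset_of X Y.
Proof. by move=> h x /h. Qed.
Lemma sq_r X Y : seteq X Y -> subset_of Y X.
Proof. by move=> h x /h. Qed.
Lemma seq_sym X Y : seteq X Y -> seteq Y X.
Proof. by move=> h x; split => /h. Qed.
Lemma seq_trans X Y Z : seteq X Y -> seteq Y Z -> seteq X Z.
Proof. by move=> h1 h2 x; split => [/h1/h2|/h2/h1]. Qed.
Lemma seq_of X Y : subset_of X Y -> subset_of Y X -> seteq X Y.
Proof. by move=> h1 h2 x; split; [apply: h1 | apply: h2]. Qed.
Lemma commsub_seq X Y X' Y' : seteq X X' -> seteq Y Y' -> seteq (commsub X Y) (commsub X' Y').
Proof.
move=> h1 h2; apply: seq_of; apply: commsub_mono;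
  by [apply: sq_l | apply: sq_r].
Qed.

Lemma comp_normal w v E N z : valid w v E -> (forall j, j \in vars w -> is_normal (N j)) ->
  z \in vars v -> is_normal (ext_tuple N E z).
Proof.
move=> hv hN hz; case: (hv z hz) => _ h _.
apply: word_sub_normal => k hk; apply: hN; exact: h.
Qed.

Lemma step_normal w v E N : valid w v E -> (forall j, j \in vars w -> is_normal (N j)) ->
  is_normal (word_sub v (ext_tuple N E)).
Proof. move=> hv hN; apply: word_sub_normal => z hz; exact: comp_normal hv hN hz. Qed.

Lemma Vrec_normal w N D st n : is_normal D -> (forall j, j \in vars w -> is_normal (N j)) ->
  (forall i, 0 < i <= n -> valid w (sword (st i)) (sext (st i))) ->
  forall m, m <= n -> is_normal (Vrec N D st m).
Proof.
move=> hD hN hv; elim => [|m ih] hm //=.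
apply: setmul_normal; last by apply: ih; lia.
apply: step_normal hN; apply: hv; lia.
Qed.

Lemma Vrec_mono N D st m n : m <= n -> subset_of (Vrec N D st m) (Vrec N D st n).
Proof.
elim: n => [|n ih]; first by rewrite leqn0 => /eqP ->.
rewrite leq_eqVlt => /orP [/eqP -> //|/ih h] x /h hx /=.
apply: setmul_r => //; exact: gen_sg.
Qed.

Lemma Vrec_step N D st n : is_normal (Vrec N D st n) ->
  subset_of (word_sub (sword (st n.+1)) (ext_tuple N (sext (st n.+1)))) (Vrec N D st n.+1).
Proof. move=> h x hx /=; apply: setmul_l => //; exact: nsg_sg. Qed.

Lemma Vrec_sub N D st n W : is_normal W -> subset_of D W ->
  (forall i, 0 < i <= n -> subset_of (word_sub (sword (st i)) (ext_tuple N (sext (st i)))) W) ->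
  subset_of (Vrec N D st n) W.
Proof.
move=> hW hD hs; elim: n hs => [|n ih] hs //=.
apply: setmul_min; first exact: nsg_sg.
  by apply: hs; lia.
by apply: ih => i hi; apply: hs; lia.
Qed.

Lemma leaf_sub N j : is_subgroup (N j) -> seteq (word_sub (Leaf j) N) (N j).
Proof. exact: word_sub_leaf. Qed.

End Main.

Lemma good_leafG j : GoodG (Leaf j) 1 (fun _ => Step (Leaf (inl j)) (fun _ => leafc j) (inl j)).
Proof.
move=> G N hN W.
have hW : is_normal W.
  apply: word_sub_normal => k; rewrite inE => /eqP ->; apply: hN; by rewrite inE.
have hX : seteq (word_sub (Leaf (inl j)) (ext_tuple N (fun _ => leafc j))) W.
  apply: word_sub_leaf; exact: gen_sg.
split => /=.
  apply: seq_of.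
    apply: setmul_min; first exact: nsg_sg.
      exact: sq_l.
    exact: commsub_subl.
  move=> x hx; apply: setmul_l; first exact: commsub_sg.
  exact: sq_r hX _ hx.
move=> i /andP [hi1 hi2]; have -> : i = 1 by lia.
apply: linear_leaf; exact: commsub_sg.
Qed.

Section CommCase.
Variable G : group.
Variable N : nat -> gset G.
Variables a b : word nat.
Hypothesis ho : is_ocw (Comm a b).
Hypothesis hN : forall j, j \in vars (Comm a b) -> is_normal (N j).
Let A := word_sub a N.
Let B := word_sub b N.
Let W := word_sub (Comm a b) N.

Lemma hNa j : j \in vars a -> is_normal (N j).
Proof. by move=> h; apply: hN; rewrite /= mem_cat h. Qed.
Lemma hNb j : j \in vars b -> is_normal (N j).
Proof. by move=> h; apply: hN; rewrite /= mem_cat h orbT. Qed.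
Lemma A_normal : is_normal A. Proof. apply: word_sub_normal; exact: hNa. Qed.
Lemma B_normal : is_normal B. Proof. apply: word_sub_normal; exact: hNb. Qed.
Lemma W_normal : is_normal W. Proof. apply: word_sub_normal; exact: hN. Qed.

Lemma disj_ab j : j \in vars b -> j \notin vars a.
Proof. exact: uniq_disj ho. Qed.

Lemma W_comm : seteq W (commsub A B).
Proof.
apply: word_sub_comm => // k hk; apply/negP => hkb; move: (disj_ab hkb); by rewrite hk.
Qed.

Lemma leafc_seq j : is_subgroup (N j) -> seteq (comp_sub N (leafc j)) (N j).
Proof. exact: word_sub_leaf. Qed.

Lemma inl_seq (u : word nat) (M : evar -> gset G) : {subset vars u <= vars (Comm a b)} ->
  (forall j, j \in vars u -> M (inl j) = comp_sub N (leafc j)) ->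
  seteq (word_sub (map_word inl u) M) (word_sub u N).
Proof.
move=> hs hM; apply: seq_trans (word_sub_inl _ _) _.
apply: word_sub_ext => j hj; rewrite hM //; apply: leafc_seq.
exact: nsg_sg (hN (hs _ hj)).
Qed.

Lemma sub_a : {subset vars a <= vars (Comm a b)}.
Proof. by move=> k hk; rewrite /= mem_cat hk. Qed.
Lemma sub_b : {subset vars b <= vars (Comm a b)}.
Proof. by move=> k hk; rewrite /= mem_cat hk orbT. Qed.

Lemma stepB_seq s d : ext_word b (sword s) d -> valid b (sword s) (sext s) ->
  let M := ext_tuple N (sext (stepB a s)) in let Ms := ext_tuple N (sext s) in
  (forall z, z \in vars (sword s) -> M z = Ms z) /\
  seteq (word_sub (sword (stepB a s)) M) (commsub A (word_sub (sword s) Ms)).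
Proof.
move=> he hv M Ms.
have hval := valid_stepB ho he hv.
have eq1 : forall z, z \in vars (sword s) -> M z = Ms z.
  move=> [j|j] hz //; rewrite /M /ext_tuple /=.
  by rewrite (negbTE (disj_ab (ext_vars he hz))).
split => //.
apply: seq_trans (word_sub_comm _ _) _.
- move=> k; rewrite vars_map' => /mapP [j hj ->]; apply/negP => /(ext_vars he) hjb.
  by move: (disj_ab hjb); rewrite hj.
- move=> z hz; exact: comp_normal hval hN hz.
apply: commsub_seq.
  apply: inl_seq; first exact: sub_a.
  by move=> j hj; rewrite /M /ext_tuple /= hj.
apply: word_sub_ext => z hz; rewrite eq1 //.
Qed.

Lemma stepA_seq s d : ext_word a (sword s) d -> valid a (sword s) (sext s) ->
  let M := ext_tuple N (sext (stepA b s)) in let Ms := ext_tuple N (sext s) in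
  (forall z, z \in vars (sword s) -> M z = Ms z) /\
  seteq (word_sub (sword (stepA b s)) M) (commsub (commsub (word_sub (sword s) Ms) B) B).
Proof.
move=> he hv M Ms.
have hval := valid_stepA ho he hv.
have hy := fresh_notin (vars (sword s)).
have eq1 : forall z, z \in vars (sword s) -> M z = Ms z.
  move=> [j|j] hz; rewrite /M /ext_tuple /=.
    have hja := ext_vars he hz.
    have : j \notin vars b by apply/negP => /disj_ab; rewrite hja.
    by move/negbTE => ->.
  case: eqP => // ej; by move: hy; rewrite -ej hz.
split => //.
have hnorm : forall z, z \in vars (sword (stepA b s)) -> is_normal (M z).
  move=> z hz; exact: comp_normal hval hN hz.
apply: seq_trans (word_sub_comm _ _) _ => //.
  move=> k; rewrite mem_cat inE => /orP [hk|/eqP ->]; rewrite vars_map'.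
    case: k hk => [j|j] hk; last by rewrite inr_map_inl.
    rewrite inl_map_mem; apply/negP => /disj_ab; by rewrite (ext_vars he hk).
  by rewrite inr_map_inl.
apply: commsub_seq; last first.
  apply: inl_seq; first exact: sub_b.
  by move=> j hj; rewrite /M /ext_tuple /= hj.
apply: seq_trans (word_sub_comm _ _) _.
- by move=> k hk; rewrite inE; apply/negP => /eqP ek; move: hy; rewrite -ek hk.
- by move=> z hz; apply: hnorm; rewrite /= mem_cat hz.
apply: commsub_seq.
  by apply: word_sub_ext => z hz; rewrite eq1.
apply: seq_trans (word_sub_leaf (gen_sg _)) _.
by rewrite /M /ext_tuple /= eqxx.
Qed.

Lemma stepF_seq : let M := ext_tuple N (sext (stepF a b)) in
  seteq (word_sub (sword (stepF a b)) M) (commsub A (commsub B W)).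
Proof.
move=> M.
have hval := valid_stepF ho.
have hnorm : forall z, z \in vars (sword (stepF a b)) -> is_normal (M z).
  move=> z hz; exact: comp_normal hval hN hz.
apply: seq_trans (word_sub_comm _ _) _ => //.
  move=> k; rewrite vars_map' => /mapP [j hj ->] /=.
  rewrite mem_cat inE vars_map' inl_map_mem; apply/negP => /orP [/disj_ab|//].
  by rewrite hj.
apply: commsub_seq.
  apply: inl_seq; first exact: sub_a.
  by move=> j hj.
apply: seq_trans (word_sub_comm _ _) _.
- by move=> k; rewrite vars_map' inE => /mapP [j _ ->].
- by move=> z hz; apply: hnorm; rewrite /= mem_cat hz orbT.
apply: commsub_seq.
  apply: inl_seq; first exact: sub_b.
  by move=> j hj.
apply: word_sub_leaf; exact: gen_sg.
Qed.
End CommCase.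

Lemma stepL_seq (G : group) (N : nat -> gset G) (x : nat) (b : word nat) : is_ocw (Comm (Leaf x) b) ->
  (forall j, j \in vars (Comm (Leaf x) b) -> is_normal (N j)) ->
  let M := ext_tuple N (sext (stepL x b)) in
  seteq (word_sub (sword (stepL x b)) M)
        (commsub (word_sub (Comm (Leaf x) b) N) (word_sub b N)).
Proof.
move=> ho hN M.
have hval := valid_stepL ho.
have hnorm : forall z, z \in vars (sword (stepL x b)) -> is_normal (M z).
  move=> z hz; exact: comp_normal hval hN hz.
apply: seq_trans (word_sub_comm _ _) _ => //.
  move=> k; rewrite inE => /eqP -> /=; rewrite vars_map' inl_map_mem.
  apply/negP => hb; move: (uniq_disj ho hb); by rewrite inE eqxx.
apply: commsub_seq.
  apply: seq_trans (word_sub_leaf (gen_sg _)) _.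
  by rewrite /M /ext_tuple /= eqxx.
apply: (inl_seq (a := Leaf x) hN); first by move=> k hk; rewrite /= inE hk orbT.
move=> j hj; rewrite /M /ext_tuple /=; case: eqP => // ej.
by move: (uniq_disj ho hj); rewrite ej inE eqxx.
Qed.

Section TS.
Variable G : group.
Implicit Types (A B W K : gset G).

Lemma TS1 A B : is_normal A -> is_normal B ->
  subset_of (commsub A (commsub B B)) (commsub (commsub A B) B).
Proof.
move=> hA hB x hx; move: (commsub_sym hx); apply: three_subgroup => //.
- apply: commsub_normal => //; exact: commsub_normal.
- apply: commsub_mono => //; exact: commsub_sym.
Qed.

Lemma TS2 A B : is_normal A -> is_normal B ->
  subset_of (commsub (commsub A A) B) (commsub (commsub A B) A).
Proof.
move=> hA hB; apply: three_subgroup => //.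
- apply: commsub_normal => //; exact: commsub_normal.
- apply: commsub_mono => //; exact: commsub_sym.
Qed.

Lemma TS3 A B W : is_normal A -> is_normal B -> is_normal W -> seteq W (commsub A B) ->
  subset_of (commsub (commsub W A) B) (setmul (commsub W W) (commsub A (commsub B W))).
Proof.
move=> hA hB hW hWAB.
have hBW : is_normal (commsub B W) by exact: commsub_normal.
apply: three_subgroup => //.
- apply: setmul_normal; [exact: commsub_normal | exact: commsub_normal].
- move=> x hx; apply: setmul_l; first exact: commsub_sg.
  move: x hx; apply: commsub_mono => //; exact: sq_r.
- move=> x /commsub_sym hx; apply: setmul_r => //; exact: commsub_sg.
Qed.
End TS.

Section Stages.
Variable G : group.
Variable N : nat -> gset G.
Variables a b : word nat.
Hypothesis ho : is_ocw (Comm a b).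
Hypothesis hN : forall j, j \in vars (Comm a b) -> is_normal (N j).
Let A := word_sub a N.
Let B := word_sub b N.
Let W := word_sub (Comm a b) N.

Lemma stageB tb sb (st : nat -> step) (s : nat) (D : gset G) :
  GoodC b tb sb -> GoodG b tb sb ->
  (forall j, 0 < j <= tb -> st (s + j) = stepB a (sb j)) ->
  (forall m, m <= s + tb -> is_normal (Vrec N D st m)) ->
  subset_of (Vrec N D st s) W ->
  subset_of (commsub (commsub A B) B) (Vrec N D st s) ->
  seteq (Vrec N D st (s + tb)) W /\
  forall j, 0 < j <= tb ->
    linear_mod (Vrec N D st (s + j).-1) (sword (st (s + j)))
               (ext_tuple N (sext (st (s + j)))) (slin (st (s + j))).
Proof.
move=> [_ _ _ GCb] GGb hst hVn hWs hABB.
have hNb' : forall j, j \in vars b -> is_normal (N j) by exact: hNb hN.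
have hA := A_normal hN; have hB := B_normal hN; have hW := W_normal hN.
have hWc : seteq W (commsub A B) by exact: W_comm ho hN.
case: (GGb G N hNb') => hRt hRlin.
set R := Vrec N (commsub B B) sb in hRt hRlin.
have hRn : forall m, m <= tb -> is_normal (Vrec N (commsub B B) sb m).
  apply: (Vrec_normal (w := b)) => //; first exact: commsub_normal.
  by move=> i hi; case: (GCb i hi).
set V := Vrec N D st.
have hVs : is_subgroup (V s) by apply: nsg_sg; apply: hVn; lia.
have Hj : forall j, 0 < j <= tb ->
   let M := ext_tuple N (sext (stepB a (sb j))) in
   let Ms := ext_tuple N (sext (sb j)) in
   [/\ (forall z, z \in vars (sword (sb j)) -> M z = Ms z),
       seteq (word_sub (sword (stepB a (sb j))) M) (commsub A (word_sub (sword (sb j)) Ms)),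
       subset_of (word_sub (sword (sb j)) Ms) (R j),
       subset_of (R j) B &
       is_normal (word_sub (sword (sb j)) Ms)].
  move=> j hj /=; case: (GCb j hj) => [[d hd _] hv _].
  case: (stepB_seq ho hN hd hv) => e1 e2; split => //.
  - have ej : j = j.-1.+1 by lia.
    rewrite [in X in subset_of _ X]ej; rewrite [in sb j]ej; apply: Vrec_step; apply: hRn; lia.
  - apply: sub_trans (sq_l hRt); apply: Vrec_mono; lia.
  - apply: (step_normal (w := b)) => //.
have I : forall j, j <= tb -> subset_of (commsub A (R j)) (V (s + j)).
  elim => [|j ih] hj.
    rewrite addn0; apply: sub_trans hABB; exact: TS1.
  have hj' : 0 < j.+1 <= tb by lia.
  case: (Hj _ hj') => _ e2 _ _ hY.
  have hVj : is_normal (V (s + j.+1)) by apply: hVn; lia.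
  move=> x /commsub_sym hx.
  have := commsub_mull hY (hRn j (ltnW hj)) hA hx.
  apply: setmul_min; first exact: nsg_sg.
    move=> y /commsub_sym /(sq_r e2) hy.
    have hs := @Vrec_step _ N D st (s + j) (hVn _ (_ : s + j <= s + tb)).
    rewrite -addnS hst // in hs; apply: hs hy; lia.
  move=> y /commsub_sym /(ih (ltnW hj)) hy.
  apply: Vrec_mono (_ : s + j <= s + j.+1) _ hy; lia.
have VW : forall j, j <= tb -> subset_of (V (s + j)) W.
  elim => [|j ih] hj; first by rewrite addn0.
  have hj' : 0 < j.+1 <= tb by lia.
  case: (Hj _ hj') => _ e2 hYR hRB _.
  rewrite addnS /V /= -addnS hst //.
  apply: setmul_min; first exact: nsg_sg.
    apply: sub_trans (sq_l e2) _; apply: sub_trans _ (sq_r hWc).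
    apply: commsub_mono => //; exact: sub_trans hYR hRB.
  apply: ih; lia.
split.
  apply: seq_of; first exact: VW.
  apply: sub_trans (sq_l hWc) _; apply: sub_trans (I _ (leqnn _)).
  apply: commsub_mono => //; exact: sq_r.
move=> j hj; rewrite hst //.
case: (Hj _ hj) => e1 e2 hYR hRB hYn.
case: (GCb j hj) => [[d hd _] hv hl].
have -> : (s + j).-1 = s + j.-1 by lia.
have hK' : is_normal (V (s + j.-1)) by apply: hVn; lia.
have hAeq : seteq (word_sub (map_word inl a) (ext_tuple N (sext (stepB a (sb j))))) A.
  apply: (inl_seq hN); first exact: sub_a.
  by move=> i hi; rewrite /ext_tuple /= hi.
have hUeq : seteq (word_sub (sword (sb j)) (ext_tuple N (sext (stepB a (sb j)))))
                  (word_sub (sword (sb j)) (ext_tuple N (sext (sb j)))).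
  by apply: word_sub_ext => z hz; rewrite e1.
apply: (linear_commr (K := R j.-1)).
- move: hl; rewrite /= vars_map'; case: (slin (sb j)) => [i|i] hl; last by rewrite inr_map_inl.
  rewrite inl_map_mem; exact: (uniq_disj ho (ext_vars hd hl)).
- exact: hK'.
- apply: word_sub_normal => z hz; rewrite e1 //; exact: comp_normal hv hNb' hz.
- apply: linear_mod_ext (fun z hz => esym (e1 z hz)) hl _.
  by have := hRlin j hj.
- move=> z k /(sq_l hAeq) hz hk.
  apply: I; first lia.
  exact: commsub_in.
- move=> q p hq /(sq_l hUeq) /hYR /hRB hp.
  have hq' : commsub A B q.
    move: q hq; apply: commsub_mono; first exact: sq_l.
    by move=> y /(sq_l hUeq) /hYR /hRB.
  apply: (Vrec_mono (_ : s <= s + j.-1)); first lia.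
  apply: hABB; exact: commsub_in.
Qed.
End Stages.


Section Extra.
Variable G : group.
Implicit Types (X Y Z K : gset G).

Lemma centl_normal Y Z : is_normal Y -> is_normal Z ->
  is_normal (fun x => forall y, Y y -> Z (gcomm x y)).
Proof.
move=> hY hZ; split; first exact: centl_sg.
move=> x h hx y hy; rewrite conj_commJ; apply: nsgJ => //; apply: hx; exact: nsgJ.
Qed.

Lemma word_sub_comm_sub (V : eqType) (u v : word V) (M : V -> gset G) :
  subset_of (word_sub (Comm u v) M) (commsub (word_sub u M) (word_sub v M)).
Proof.
apply: gen_min; first exact: commsub_sg.
move=> _ [g [hg ->]] /=; apply: commsub_in; apply: eval_values => k hk; apply: hg;
by rewrite /= mem_cat hk ?orbT.
Qed.

Lemma comm_in_normal X Y (x y : G) : is_normal Y -> Y y -> Y (gcomm x y).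
Proof. move=> hY hy; apply: (commsub_subr (X := fun _ => True) hY); exact: commsub_in. Qed.
Lemma comm_in_normall X Y (x y : G) : is_normal X -> X x -> X (gcomm x y).
Proof. move=> hX hx; apply: (commsub_subl (Y := fun _ => True) hX); exact: commsub_in. Qed.
End Extra.

Definition stC (a b : word nat) (ta : nat) (sa sb : nat -> step) (i : nat) : step :=
  if i == 1 then stepF a b
  else if i <= ta.+1 then stepA b (sa i.-1) else stepB a (sb (i - ta.+1)).

Definition stL (x : nat) (b : word nat) (sb : nat -> step) (i : nat) : step :=
  if i == 1 then stepL x b else stepB (Leaf x) (sb i.-1).

Lemma goodC_comp a b ta sa tb sb : is_ocw (Comm a b) -> 0 < height a ->
  GoodC a ta sa -> GoodC b tb sb -> GoodC (Comm a b) (ta.+1 + tb) (stC a b ta sa sb).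
Proof.
move=> ho ha [_ hta hta0 GCa] [_ htb htb0 GCb]; split => //.
- rewrite /=; set m := maxn _ _.
  have hm : 0 < m by apply: leq_trans ha (leq_maxl _ _).
  have := Tb_mono (leq_maxl (height a) (height b)); have := Tb_mono (leq_maxr (height a) (height b)).
  rewrite -/m; case: m hm => // m _; rewrite Tb_S -addnn => h1 h2.
  have e1 := leq_trans hta h2; have e2 := leq_trans htb h1; lia.
- move=> i hi; rewrite /stC; case: eqP => [ei|ne].
    split.
    + exists 1; first exact: ext_F.
      rewrite /=; exact: leq_trans ha (leq_maxl _ _).
    + exact: valid_stepF.
    + by rewrite /= !mem_cat inE eqxx !orbT.
  case: leqP => hi2.
    have hi' : 0 < i.-1 <= ta by lia.
    case: (GCa _ hi') => [[d hd hdl] hv hl].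
    split.
    + exists d.+1; last by rewrite /=; apply: leq_trans (leq_maxl _ _); move: ha hdl; case: (height a).
      apply: ext_graftA; first exact: ext_commL.
      exact: fresh_notin.
    + exact: valid_stepA ho hd hv.
    + by rewrite /= !mem_cat hl.
  have hi' : 0 < i - ta.+1 <= tb by lia.
  case: (GCb _ hi') => [[d hd hdl] hv hl].
  split.
  + exists d; first exact: ext_commR.
    rewrite /=; lia.
  + exact: valid_stepB ho hd hv.
  + by rewrite /= !mem_cat hl orbT.
Qed.

Lemma goodC_leaf x b tb sb : is_ocw (Comm (Leaf x) b) ->
  GoodC b tb sb -> GoodC (Comm (Leaf x) b) tb.+1 (stL x b sb).
Proof.
move=> ho [htb0 htb hpos GCb]; split => //.
- rewrite /= max0n.
  case: (height b) htb htb0 => [|m] htb htb0; first by rewrite htb0.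
  have := Tb_S m; rewrite -addnn; lia.
- move=> i hi; rewrite /stL; case: eqP => [ei|ne].
    split.
    + exists 0 => //; exact: (@ext_word0 (Comm (Leaf x) b)).
    + exact: valid_stepL.
    + by rewrite /= inE eqxx.
  have hi' : 0 < i.-1 <= tb by lia.
  case: (GCb _ hi') => [[d hd hdl] hv hl].
  split.
  + exists d; first exact: ext_commR.
    rewrite /= max0n; lia.
  + exact: valid_stepB ho hd hv.
  + by rewrite /= inE hl orbT.
Qed.

Lemma goodG_comp a b ta sa tb sb : is_ocw (Comm a b) -> 0 < height a ->
  GoodC a ta sa -> GoodG a ta sa -> GoodC b tb sb -> GoodG b tb sb ->
  GoodG (Comm a b) (ta.+1 + tb) (stC a b ta sa sb).
Proof.
move=> ho ha GCa GGa GCb GGb G N hN W.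
have [_ _ _ GCw] := goodC_comp ho ha GCa GCb.
case: GCa => _ _ hta0 GCa'.
set st := stC a b ta sa sb.
set A := word_sub a N; set B := word_sub b N.
have hA : is_normal A := A_normal hN.
have hB : is_normal B := B_normal hN.
have hW : is_normal W := W_normal hN.
have hWc : seteq W (commsub A B) := W_comm ho hN.
have hNa : forall j, j \in vars a -> is_normal (N j) by exact: hNa hN.
set D := commsub W W.
have hD : is_normal D by exact: commsub_normal.
set V := Vrec N D st.
have hVn : forall m, m <= ta.+1 + tb -> is_normal (V m).
  apply: (Vrec_normal (w := Comm a b)) => // i hi; by case: (GCw i hi).
have hVs : forall m, m <= ta.+1 + tb -> is_subgroup (V m) by move=> m hm; exact: nsg_sg (hVn m hm).
case: (GGa G N hNa) => hUt hUlin.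
set U := Vrec N (commsub A A) sa in hUt hUlin.
have hUn : forall m, m <= ta -> is_normal (U m).
  apply: (Vrec_normal (w := a)) => //; first exact: commsub_normal.
  by move=> i hi; case: (GCa' i hi).
have hstA : forall i, 0 < i <= ta -> st i.+1 = stepA b (sa i).
  move=> i hi; rewrite /st /stC; case: eqP => [h|_]; first lia.
  case: ifP => [_|h] //; move/negbT: h; lia.
have hstB : forall j, 0 < j <= tb -> st (ta.+1 + j) = stepB a (sb j).
  move=> j hj; rewrite /st /stC; case: eqP => [h|_]; first lia.
  case: ifP => [h|_]; first lia.
  congr stepB; congr sb; lia.
have hF := stepF_seq ho hN.
have hV1 : subset_of (setmul D (commsub A (commsub B W))) (V 1).
  apply: setmul_min; first exact: hVs.
    move=> x hx; apply: setmul_r => //; exact: gen_sg.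
  move=> x /(sq_r hF) hx; apply: setmul_l => //; exact: nsg_sg.
have hTS3 : subset_of (commsub (commsub W A) B) (V 1).
  apply: sub_trans hV1; exact: TS3.
have hWA : subset_of (commsub A B) W by exact: sq_r hWc.
have hSA : forall i, 0 < i <= ta ->
   let M := ext_tuple N (sext (stepA b (sa i))) in
   let Ms := ext_tuple N (sext (sa i)) in
   [/\ (forall z, z \in vars (sword (sa i)) -> M z = Ms z),
       seteq (word_sub (sword (stepA b (sa i))) M) (commsub (commsub (word_sub (sword (sa i)) Ms) B) B),
       subset_of (word_sub (sword (sa i)) Ms) A,
       subset_of (word_sub (sword (sa i)) M) A &
       is_normal (word_sub (sword (sa i)) Ms)].
  move=> i hi /=; case: (GCa' i hi) => [[d hd _] hv _].
  case: (stepA_seq ho hN hd hv) => e1 e2.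
  have hY : subset_of (word_sub (sword (sa i)) (ext_tuple N (sext (sa i)))) (U i).
    have ej : i = i.-1.+1 by lia.
    rewrite [in X in subset_of _ X]ej [in sa i]ej; apply: Vrec_step; apply: hUn; lia.
  have hm : subset_of (U i) (U ta) by apply: Vrec_mono; lia.
  split => //.
  - by move=> x /hY /hm /(sq_l hUt).
  - have hext : seteq (word_sub (sword (sa i)) (ext_tuple N (sext (stepA b (sa i)))))
                        (word_sub (sword (sa i)) (ext_tuple N (sext (sa i)))).
      by apply: word_sub_ext => z hz; rewrite e1.
    by move=> x /(sq_l hext) /hY /hm /(sq_l hUt).
  - apply: (step_normal (w := a)) => //.
have IA : forall i, i <= ta -> subset_of (commsub (commsub (U i) B) B) (V i.+1).
  elim => [|i ih] hi.
    apply: sub_trans hTS3; apply: commsub_mono => //.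
    apply: sub_trans (TS2 hA hB) _; apply: commsub_mono => //.
  have hi' : 0 < i.+1 <= ta by lia.
  case: (hSA _ hi') => _ e2 _ _ hY.
  have hUi := hUn i (ltnW hi).
  move=> x hx.
  have hx1 : commsub (setmul (commsub (word_sub (sword (sa i.+1)) (ext_tuple N (sext (sa i.+1)))) B) (commsub (U i) B)) B x.
    move: x hx; apply: commsub_mono => //; exact: commsub_mull.
  have := commsub_mull (commsub_normal hY hB) (commsub_normal hUi hB) hB hx1.
  apply: setmul_min; first by apply: hVs; lia.
    move=> y /(sq_r e2) hy.
    have hs := @Vrec_step _ N D st i.+1 (hVn _ (_ : i.+1 <= ta.+1 + tb)).
    rewrite hstA // in hs; apply: hs hy; lia.
  move=> y /(ih (ltnW hi)) hy; apply: Vrec_mono (_ : i.+1 <= i.+2) _ hy; lia.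
have hsW : forall i, 0 < i <= ta.+1 ->
    subset_of (word_sub (sword (st i)) (ext_tuple N (sext (st i)))) W.
  move=> i hi; case: (eqVneq i 1) => [->|ne].
    move=> x /(sq_l hF) hx; move: (commsub_subr (commsub_normal hB hW) hx).
    exact: commsub_subr.
  have hi' : 0 < i.-1 <= ta by move/eqP: ne; lia.
  have -> : i = i.-1.+1 by lia.
  rewrite hstA //; case: (hSA _ hi') => _ e2 hYA _ hYn.
  move=> x /(sq_l e2) /(commsub_subl (commsub_normal hYn hB)) hx.
  apply: hWA; move: x hx; exact: commsub_mono.
have VW : forall m, m <= ta.+1 -> subset_of (V m) W.
  move=> m hm; apply: Vrec_sub => //; first exact: commsub_subl.
  move=> i hi; apply: hsW; lia.
have hABB : subset_of (commsub (commsub A B) B) (V ta.+1).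
  apply: sub_trans (IA _ (leqnn _)); apply: commsub_mono => //.
  apply: commsub_mono => //; exact: sq_r.
have hDs : is_subgroup D by exact: commsub_sg.
have lin1 : linear_mod (V 0) (sword (st 1)) (ext_tuple N (sext (st 1))) (slin (st 1)).
  have -> : st 1 = stepF a b by [].
  set MF := ext_tuple N (sext (stepF a b)).
  have hval := valid_stepF ho.
  have hMF : forall z, z \in vars (sword (stepF a b)) -> is_normal (MF z).
    move=> z hz; exact: comp_normal hval hN hz.
  have hL : seteq (word_sub (Leaf (inr 0) : word evar) MF) W by apply: word_sub_leaf; exact: gen_sg.
  have hLn : is_normal (word_sub (Leaf (inr 0) : word evar) MF).
    apply: word_sub_normal => z; rewrite inE => /eqP ->; apply: hMF.
    by rewrite /= !mem_cat inE eqxx !orbT.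
  have hU2n : is_normal (word_sub (Comm (map_word inl b) (Leaf (inr 0)) : word evar) MF).
    apply: word_sub_normal => z hz; apply: hMF; by rewrite /= mem_cat hz orbT.
  apply: (linear_commr (K := D)) => //.
  - by rewrite vars_map' inr_map_inl.
  - apply: (linear_commr (K := D)) => //.
    + by rewrite vars_map' inr_map_inl.
    + exact: linear_leaf.
    + move=> z k _ hk; exact: (@comm_in_normal _ (fun _ => True) _ z k hD hk).
    + move=> q p hq hp; apply: commsub_in.
        apply: (sq_l hL); exact: (@commsub_subr _ _ _ hLn q hq).
      exact: (sq_l hL).
  - move=> z k _ hk; exact: (@comm_in_normal _ (fun _ => True) _ z k hD hk).
  - have hU2W : subset_of (word_sub (Comm (map_word inl b) (Leaf (inr 0)) : word evar) MF) W.
      move=> x /word_sub_comm_sub /(commsub_subr hLn); exact: (sq_l hL).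
    move=> q p hq hp; apply: commsub_in; apply: hU2W => //.
    exact: (@commsub_subr _ _ _ hU2n q hq).
have linA : forall i, 0 < i <= ta ->
    linear_mod (V i) (sword (st i.+1)) (ext_tuple N (sext (st i.+1))) (slin (st i.+1)).
  move=> i hi; rewrite hstA //.
  case: (hSA _ hi) => e1 e2 hYA hMA hYn.
  case: (GCa' i hi) => [[d hd _] hv hl].
  have hval := valid_stepA ho hd hv.
  set M := ext_tuple N (sext (stepA b (sa i))).
  have hMn : forall z, z \in vars (sword (stepA b (sa i))) -> is_normal (M z).
    move=> z hz; exact: comp_normal hval hN hz.
  have hy := fresh_notin (vars (sword (sa i))).
  have hVi : is_normal (V i) by apply: hVn; lia.
  set K1 := fun x => forall z, B z -> V i (gcomm x z).
  have hK1 : is_normal K1 by exact: centl_normal.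
  have hLy : seteq (word_sub (Leaf (inr (fresh (vars (sword (sa i))))) : word evar) M) B.
    apply: seq_trans (word_sub_leaf (gen_sg _)) _.
    rewrite /M /ext_tuple /= eqxx; by move=> x.
  have hBm : seteq (word_sub (map_word inl b) M) B.
    apply: (inl_seq hN); first exact: sub_b.
    by move=> j hj; rewrite /M /ext_tuple /= hj.
  have hU2n : is_normal (word_sub (Comm (sword (sa i)) (Leaf (inr (fresh (vars (sword (sa i)))))) : word evar) M).
    apply: word_sub_normal => z hz; apply: hMn; by rewrite /= mem_cat hz.
  have hU2W : subset_of (word_sub (Comm (sword (sa i)) (Leaf (inr (fresh (vars (sword (sa i)))))) : word evar) M) W.
    move=> x /word_sub_comm_sub hx; apply: hWA; move: x hx.
    apply: commsub_mono => //; exact: sq_l.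
  change (slin (stepA b (sa i))) with (slin (sa i)).
  apply: (linear_comml (K := K1)) => //.
  - move: hl; rewrite vars_map'; case: (slin (sa i)) => [j|j] hl; last by rewrite inr_map_inl.
    rewrite inl_map_mem; apply/negP => /(uniq_disj ho); by rewrite (ext_vars hd hl).
  - apply: (linear_comml (K := U i.-1)) => //.
    + rewrite inE; apply/negP => /eqP e; move: hy; by rewrite -e hl.
    + exact: linear_mod_ext (fun z hz => esym (e1 z hz)) hl (hUlin i hi).
    + move=> k z hk hz z' hz'.
      have hi1 : i.-1 <= ta by lia.
      have hIA := IA _ hi1; rewrite (_ : i.-1.+1 = i) in hIA; last lia.
      apply: hIA; apply: commsub_in => //; apply: commsub_in => //; exact: (sq_l hLy).
    + move=> q p hq hp z' hz'.
      apply: (Vrec_mono (_ : 1 <= i)); first lia.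
      apply: hTS3; apply: commsub_in => //; apply: commsub_in; last exact: hMA.
      apply: hWA; move: q hq; apply: commsub_mono => //; exact: sq_l.
  - move=> k z hk hz; apply: hk; exact: (sq_l hBm).
  - move=> q p hq hp; apply: (Vrec_mono (_ : 0 <= i)) => //.
    apply: commsub_in; apply: hU2W => //; exact: (@commsub_subl _ _ _ hU2n q hq).
have [hfin linB] := stageB ho hN GCb GGb hstB hVn (VW _ (leqnn _)) hABB.
split; first exact: hfin.
move=> i hi; case: (eqVneq i 1) => [->|ne]; first exact: lin1.
case: (leqP i ta.+1) => hi2.
  have hk : 0 < i.-1 <= ta by move/eqP: ne; lia.
  have := linA _ hk; rewrite (_ : i.-1.+1 = i) //; lia.
have hj : 0 < i - ta.+1 <= tb by lia.
have := linB _ hj; rewrite (_ : ta.+1 + (i - ta.+1) = i) //; lia.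
Qed.

Lemma goodG_leaf x b tb sb : is_ocw (Comm (Leaf x) b) ->
  GoodC b tb sb -> GoodG b tb sb -> GoodG (Comm (Leaf x) b) tb.+1 (stL x b sb).
Proof.
move=> ho GCb GGb G N hN W.
have [_ _ _ GCw] := goodC_leaf ho GCb.
set st := stL x b sb.
set A := word_sub (Leaf x) N; set B := word_sub b N.
have hA : is_normal A := A_normal hN.
have hB : is_normal B := B_normal hN.
have hW : is_normal W := W_normal hN.
have hWc : seteq W (commsub A B) := W_comm ho hN.
have hWA : subset_of (commsub A B) W by exact: sq_r hWc.
set D := commsub W W.
have hD : is_normal D by exact: commsub_normal.
set V := Vrec N D st.
have hVn : forall m, m <= 1 + tb -> is_normal (V m).
  apply: (Vrec_normal (w := Comm (Leaf x) b)) => // i hi; by case: (GCw i hi).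
have hstB : forall j, 0 < j <= tb -> st (1 + j) = stepB (Leaf x) (sb j).
  by move=> j hj; rewrite /st /stL; case: eqP => [h|_] //; lia.
have hL := stepL_seq ho hN.
have hV1 : subset_of (word_sub (sword (stepL x b)) (ext_tuple N (sext (stepL x b)))) (V 1).
  move=> y hy; apply: setmul_l => //; exact: commsub_sg.
have hWs : subset_of (V 1) W.
  apply: setmul_min; first exact: nsg_sg.
    by move=> y /(sq_l hL) /(commsub_subl hW).
  exact: commsub_subl.
have hABB : subset_of (commsub (commsub A B) B) (V 1).
  move=> y hy; apply: hV1; apply: (sq_r hL); move: y hy; apply: commsub_mono => //.
have lin1 : linear_mod (V 0) (sword (st 1)) (ext_tuple N (sext (st 1))) (slin (st 1)).
  have -> : st 1 = stepL x b by [].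
  set ML := ext_tuple N (sext (stepL x b)).
  have hval := valid_stepL ho.
  have hLf : seteq (word_sub (Leaf (inl x) : word evar) ML) W.
    apply: seq_trans (word_sub_leaf (gen_sg _)) _.
    rewrite /ML /ext_tuple /= eqxx; by move=> y.
  have hLn : is_normal (word_sub (Leaf (inl x) : word evar) ML).
    apply: word_sub_normal => z; rewrite inE => /eqP ->.
    apply: (comp_normal hval hN); by rewrite /= inE eqxx.
  apply: (linear_comml (K := D)) => //.
  - rewrite vars_map' inl_map_mem; apply/negP => /(uniq_disj ho); by rewrite inE eqxx.
  - exact: linear_leaf (nsg_sg hD).
  - move=> k z hk _; exact: (@comm_in_normall _ _ (fun _ => True) k z hD hk).
  - move=> q p hq hp; apply: commsub_in; apply: (sq_l hLf) => //.
    exact: (@commsub_subl _ _ _ hLn q hq).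
have [hfin linB] := stageB ho hN GCb GGb hstB hVn hWs hABB.
split; first exact: hfin.
move=> i hi; case: (eqVneq i 1) => [->|ne]; first exact: lin1.
have hj : 0 < i.-1 <= tb by move/eqP: ne; lia.
have := linB _ hj; rewrite (_ : 1 + i.-1 = i) //; lia.
Qed.


Lemma good_all (w : word nat) : is_ocw w -> exists t st, GoodC w t st /\ GoodG w t st.
Proof.
elim: w => [j|a iha b ihb] ho.
  exists 1, (fun _ => Step (Leaf (inl j)) (fun _ => leafc j) (inl j)); split; last exact: good_leafG.
  split => // i hi; split => /=.
  - by exists 0 => //; exact: (@ext_word0 (Leaf j)).
  - move=> z; rewrite inE => /eqP ->; apply: (valid_leafc (w := Leaf j)); [by rewrite inE | by left].
  - by rewrite inE.
have [ta [sa [GCa GGa]]] := iha (ocw_l ho).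
have [tb [sb [GCb GGb]]] := ihb (ocw_r ho).
case: a ho iha GCa GGa => [x|a1 a2] ho _ GCa GGa.
  exists tb.+1, (stL x b sb); split; [exact: goodC_leaf | exact: goodG_leaf].
exists (ta.+1 + tb), (stC (Comm a1 a2) b ta sa sb); split.
  exact: goodC_comp.
exact: goodG_comp.
Qed.

Theorem theorem1p1 (w : word nat) (r : nat) :
  is_ocw w -> perm_eq (vars w) (iota 0 r) ->
  exists (t : nat) (st : nat -> step),
    (if height w == 0 then t = 1 else t <= 2 ^ height w + 2 ^ (height w).-1 - 1) /\
    (forall i, 1 <= i <= t ->
       (exists d, ext_word w (sword (st i)) d /\
                  (if height w == 0 then d = 0 else d <= (height w).-1)) /\
       oc_ext_valid r (sword (st i)) (sext (st i)) /\
       slin (st i) \in vars (sword (st i))) /\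
    forall (G : group) (N : nat -> gset G),
      (forall j, j < r -> is_normal (N j)) ->
      let W := word_sub w N in
      exists V : nat -> gset G,
        seteq (V 0) (commsub W W) /\ seteq (V t) W /\
        forall i, 1 <= i <= t ->
          let M := ext_tuple N (sext (st i)) in
          [/\ is_normal (V i), subset_of (V i.-1) (V i),
              seteq (V i) (setmul (word_sub (sword (st i)) M) (V i.-1)) &
              linear_mod (V i.-1) (sword (st i)) M (slin (st i))].
Proof.
move=> ho hp.
have memw : forall j, (j \in vars w) = (j < r).
  by move=> j; rewrite (perm_mem hp) mem_iota.
have [t [st [[h0 htb ht0 GC] GG]]] := good_all ho.
exists t, st; split.
  case: eqP => [/h0 //|hne]; move: htb; rewrite /Tb; case: eqP => //.
split.
  move=> i hi; case: (GC i hi) => [[d hd hdl] hv hl]; split; last split => //.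
    exists d; split => //; case: eqP => [e|//]; move: hdl; rewrite e; lia.
  move=> z hz; case: (hv z hz) => h1 h2 h3; split => //; split => // k hk.
  by rewrite -memw; apply: h2.
move=> G N hN W.
have hN' : forall j, j \in vars w -> is_normal (N j) by move=> j; rewrite memw; exact: hN.
case: (GG G N hN') => hfin hlin.
exists (Vrec N (commsub W W) st); split; first by move=> x.
split; first exact: hfin.
have hW : is_normal W by exact: word_sub_normal.
have hVn := Vrec_normal (w := w) (commsub_normal hW hW) hN' (fun i hi => let: And3 _ h _ := GC i hi in h).
case=> [//|i] hi M; split.
- exact: hVn.
- apply: Vrec_mono; lia.
- by move=> x.
- exact: hlin.
Qed.
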